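(* Let $K_n$ be the complete graph on $n$ vertices. Then $$\liminf_{p\to\infty}\|M_{K_n}\|_p^p\geq \sup_{\alpha>1,\ k\in\{1,\dots,n\}}\frac{k\alpha^{n/k}+\alpha(n-k)}{k\alpha^{n/k}+n-k}.$$
   Context: For a finite connected graph $G=(V,E)$ with graph distance $d_G$ and $f:V\to\mathbb{R}$, $M_Gf(v)=\sup_{r\geq 0}\frac{1}{|B(v,r)|}\sum_{u\in B(v,r)}|f(u)|$, where $B(v,r)=\{u\in V: d_G(u,v)\le r\}$. For $g:V\to\mathbb{R}$, $\|g\|_p=(\sum_{v\in V}|g(v)|^p)^{1/p}$ and $\|M_G\|_p=\sup_{f\neq 0}\|M_Gf\|_p/\|f\|_p$. *)

(* Defs.v *)
From HB Require Import structures.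
From mathcomp Require Import all_boot all_order all_algebra.
From mathcomp Require Import all_classical all_reals all_analysis.
Set Implicit Arguments. Unset Strict Implicit. Unset Printing Implicit Defensive.
Import Order.TTheory GRing.Theory Num.Theory.
Local Open Scope ring_scope.

Section GraphMax.
Variables (R : realType) (T : finType) (e : rel T).

(* closed ball B(v,r) = {u | d_G(u,v) <= r}: u is reachable from v by an
   e-path with at most r edges *)
Definition gball (v : T) (r : R) : {set T} :=
  [set u : T | `[< exists p : seq T,
       [/\ path e v p, last v p = u & ((size p)%:R <= r)] >]].

Definition maxop (f : T -> R) (v : T) : R :=
  sup [set y : R | exists2 r : R, 0 <= r &
         y = (#|gball v r|%:R)^-1 * \sum_(u in gball v r) `|f u|].

Definition lpnorm (p : R) (g : T -> R) : R :=
  powR (\sum_(v : T) powR `|g v| p) p^-1.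

Definition maxop_norm (p : R) : R :=
  sup [set y : R | exists2 f : T -> R, f <> (fun _ => 0) &
         y = lpnorm p (maxop f) / lpnorm p f].
End GraphMax.

Definition complete_rel (n : nat) : rel 'I_n := fun u v => u != v.

(* Main.v *)
Require Import Defs.
From HB Require Import structures.
From mathcomp Require Import all_boot all_order all_algebra.
From mathcomp Require Import all_classical all_reals all_analysis.
From mathcomp Require Import ring.
Import Order.TTheory GRing.Theory Num.Theory.
Import numFieldTopology.Exports numFieldNormedType.Exports.
Local Open Scope ring_scope.
Local Open Scope classical_set_scope.

Section H.
Variables (R : realType) (T : finType) (e : rel T).

Lemma gball0 v : gball e v (0:R) = [set v]%SET.
Proof.
apply/setP => u; rewrite !inE; apply/asboolP/eqP.
  by case=> -[|x p] [_ /= <- h] //; rewrite lern0 in h.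
by move=> ->; exists [::].
Qed.

Lemma avg_le_sum (f : T -> R) (B : {set T}) :
  (#|B|%:R)^-1 * \sum_(u in B) `|f u| <= \sum_u `|f u|.
Proof.
have hs : \sum_(u in B) `|f u| <= \sum_u `|f u|.
  by rewrite [leRHS](bigID (mem B)) /= lerDl sumr_ge0.
case: (posnP #|B|) => hB.
  by rewrite hB invr0 mul0r sumr_ge0.
apply: le_trans hs; rewrite ler_piMl ?sumr_ge0 // invf_le1 ?ler1n ?ltr0n //.
Qed.

Lemma maxop_ub (f : T -> R) v : maxop e f v <= \sum_u `|f u|.
Proof.
apply: ge_sup.
  by exists ((#|gball e v (0:R)|%:R)^-1 * \sum_(u in gball e v (0:R)) `|f u|); exists 0.
by move=> _ [r _ ->]; exact: avg_le_sum.
Qed.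

Lemma maxop_ge (f : T -> R) v (r : R) : 0 <= r ->
  (#|gball e v r|%:R)^-1 * \sum_(u in gball e v r) `|f u| <= maxop e f v.
Proof.
move=> r0; apply: ub_le_sup; last by exists r.
by exists (\sum_u `|f u|) => _ [s _ ->]; exact: avg_le_sum.
Qed.

Lemma maxop_ge_self (f : T -> R) v : `|f v| <= maxop e f v.
Proof.
have := @maxop_ge f v 0 (lexx 0); rewrite gball0 big_set1 cards1 invr1 mul1r //.
Qed.

Lemma maxop_ge0 (f : T -> R) v : 0 <= maxop e f v.
Proof. exact: le_trans (maxop_ge_self f v). Qed.

Lemma lp_mono p (g h : T -> R) : 0 < p -> (forall v, `|g v| <= `|h v|) ->
  lpnorm p g <= lpnorm p h.
Proof.
move=> p0 gh; rewrite /lpnorm; apply: ge0_ler_powR.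
- by rewrite invr_ge0 ltW.
- by rewrite nnegrE sumr_ge0 // => i _; rewrite powR_ge0.
- by rewrite nnegrE sumr_ge0 // => i _; rewrite powR_ge0.
apply: ler_sum => i _; apply: ge0_ler_powR => //; first exact: ltW.
Qed.

Lemma lp_ge0 p (g : T -> R) : 0 <= lpnorm p g.
Proof. exact: powR_ge0. Qed.

Lemma lp_powR p (g : T -> R) : 0 < p -> powR (lpnorm p g) p = \sum_v powR `|g v| p.
Proof.
move=> p0; rewrite /lpnorm -powRrM mulVf ?gt_eqF // powRr1 //.
by rewrite sumr_ge0 // => i _; rewrite powR_ge0.
Qed.


Lemma powRK (p x : R) : 0 < p -> 0 <= x -> powR (powR x p) p^-1 = x.
Proof. by move=> p0 x0; rewrite -powRrM mulfV ?gt_eqF // powRr1. Qed.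

Lemma abs_le_lp (p : R) (f : T -> R) u : 0 < p -> `|f u| <= lpnorm p f.
Proof.
move=> p0; rewrite -[leLHS](@powRK p) //; rewrite /lpnorm.
apply: ge0_ler_powR.
- by rewrite invr_ge0 ltW.
- by rewrite nnegrE powR_ge0.
- by rewrite nnegrE sumr_ge0 // => i _; rewrite powR_ge0.
rewrite (bigD1 u) //= lerDl sumr_ge0 // => i _; rewrite powR_ge0.
Qed.

Lemma ratio_ub (p : R) (f : T -> R) : 0 < p ->
  lpnorm p (maxop e f) / lpnorm p f <= powR (#|T|%:R) p^-1 * #|T|%:R.
Proof.
move=> p0; set L := lpnorm p f.
have L0 : 0 <= L by exact: lp_ge0.
have B0 : 0 <= powR (#|T|%:R) p^-1 * #|T|%:R by rewrite mulr_ge0 ?powR_ge0.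
case: (eqVneq L 0) => [->|Ln0]; first by rewrite invr0 mulr0.
have Lp : 0 < L by rewrite lt_def Ln0.
rewrite ler_pdivrMr //.
apply: (@le_trans _ _ (lpnorm p (fun _ : T => #|T|%:R * L))).
  apply: lp_mono => // v; rewrite ger0_norm ?maxop_ge0 // ger0_norm ?mulr_ge0 //.
  apply: (le_trans (maxop_ub f v)).
  rewrite -sum1_card natr_sum mulr_suml; apply: ler_sum => i _; rewrite mul1r.
  exact: abs_le_lp.
rewrite /lpnorm sumr_const -[_ *+ _]mulr_natl.
rewrite powRM ?ler0n ?powR_ge0 // powRK // ger0_norm ?mulr_ge0 // mulrA.
by [].
Qed.

End H.

Lemma gball1 (R : realType) n (v : 'I_n) : gball (@complete_rel n) v (1:R) = [set: 'I_n]%SET.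
Proof.
apply/setP => u; rewrite !inE; apply/asboolP.
case: (eqVneq u v) => [->|uv]; first by exists [::].
by exists [:: u]; split => //=; rewrite andbT /complete_rel eq_sym.
Qed.

Lemma sum_split (R : realType) n k (x y : R) : (k <= n)%N ->
  \sum_(u < n) (if (u < k)%N then x else y) = k%:R * x + (n%:R - k%:R) * y.
Proof.
move=> kn; rewrite -(big_mkord xpredT (fun u => if (u < k)%N then x else y)).
rewrite (big_cat_nat (leq0n k) kn) /=.
rewrite (@eq_big_nat _ _ _ 0 k _ (fun=> x)); last first.
  by move=> i /andP[_ ->].
rewrite (@eq_big_nat _ _ _ k n _ (fun=> y)); last first.
  by move=> i /andP[h _]; rewrite ltnNge h.
by rewrite !sumr_const_nat subn0 -natrB // !mulr_natl.
Qed.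



Lemma powR_div (R : realType) (x y p : R) : 0 <= x -> 0 < y ->
  powR (x / y) p = powR x p / powR y p.
Proof.
move=> x0 y0.
have yp : 0 < powR y p by apply: powR_gt0.
rewrite -[LHS](mulfK (negbT (gt_eqF yp))); congr (_ / _).
rewrite -powRM; first by rewrite divfK // gt_eqF.
  by apply: divr_ge0 => //; apply: ltW.
by apply: ltW.
Qed.

Lemma main_bound (R : realType) (n k : nat) (a p : R) :
  (1 <= k <= n)%N -> 1 < a -> 0 < p ->
  (k%:R * powR a (n%:R / k%:R) + a * (n%:R - k%:R)) /
                   (k%:R * powR a (n%:R / k%:R) + (n%:R - k%:R))
  <= powR (maxop_norm (@complete_rel n) p) p.
Proof.
move=> /andP[k1 kn] a1 p0.
set N : R := n%:R; set K : R := k%:R; set r := N / K.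
have Kp : 0 < K by rewrite ltr0n.
have KN : K <= N by rewrite ler_nat.
have Np : 0 < N by exact: lt_le_trans KN.
have NK0 : 0 <= N - K by rewrite subr_ge0.
have r0 : 0 <= r by rewrite divr_ge0 // ltW.
set c := powR a (r / p).
have c1 : 1 <= c.
  rewrite /c -[leLHS](powRr0 a); apply: ler_powR; first exact: ltW.
  by rewrite divr_ge0 // ltW.
have c0 : 0 <= c by exact: le_trans c1.
have hc : powR c p = powR a r by rewrite /c -powRrM divfK ?gt_eqF.
pose f : 'I_n -> R := fun u => if (u < k)%N then c else 1.
set m := (K * c + (N - K)) / N.
have m0 : 0 <= m.
  apply: divr_ge0; last exact: ltW.
  by apply: addr_ge0 => //; apply: mulr_ge0 => //; exact: ltW.
pose g : 'I_n -> R := fun u => if (u < k)%N then c else m.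
have hfp : \sum_v powR `|f v| p = K * powR a r + (N - K).
  rewrite (eq_bigr (fun u : 'I_n => if (u < k)%N then powR c p else 1)).
    by rewrite sum_split // mulr1 hc.
  by move=> u _; rewrite /f; case: ifP => _; rewrite ger0_norm // powR1.
have hgp : \sum_v powR `|g v| p = K * powR a r + (N - K) * powR m p.
  rewrite (eq_bigr (fun u : 'I_n => if (u < k)%N then powR c p else powR m p)).
    by rewrite sum_split // hc.
  by move=> u _; rewrite /g; case: ifP => _; rewrite ger0_norm.
have hg : forall v, g v <= maxop (@complete_rel n) f v.
  move=> v; rewrite /g; case: ifP => vk.
    by have := @maxop_ge_self R _ (@complete_rel n) f v; rewrite /f vk ger0_norm.
  have := @maxop_ge _ _ (@complete_rel n) f v 1 ler01.
  rewrite gball1 cardsT card_ord (eq_bigl xpredT); last by move=> u; rewrite inE.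
  rewrite (eq_bigr (fun u : 'I_n => if (u < k)%N then c else 1)); last first.
    by move=> u _; rewrite /f; case: ifP => _; rewrite ger0_norm.
  by rewrite sum_split // mulr1 mulrC.
have hm : powR a p^-1 <= m.
  have t0 : 0 <= K / N by rewrite divr_ge0 // ltW.
  have t1 : K / N <= 1 by rewrite ler_pdivrMr // mul1r.
  have cp : 0 < c by exact: lt_le_trans ltr01 c1.
  have := @concave_ln R (Itv01 t0 t1) c 1 cp ltr01.
  rewrite !convRE /= ln1 mulr0 addr0 ln_powR => h.
  have em : K / N * c + (1 - K / N) * 1 = m.
    by rewrite /m; field; rewrite gt_eqF.
  rewrite em in h.
  have mp : 0 < m.
    rewrite -em; apply: ltr_wpDr; first by rewrite mulr1 subr_ge0.
    by apply: mulr_gt0 => //; apply: divr_gt0.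
  rewrite -[in leRHS](@lnK _ m) ?posrE //.
  rewrite /powR gt_eqF; last exact: lt_trans a1.
  rewrite ler_expR; apply: le_trans h; rewrite le_eqVlt; apply/orP; left; apply/eqP.
  by rewrite /r; field; rewrite !gt_eqF.
have hmp : a <= powR m p.
  have a0 : 0 <= a by apply: ltW; apply: lt_trans a1.
  rewrite -[leLHS](@powRK _ p^-1 a) ?invr_gt0 // invrK.
  apply: ge0_ler_powR => //; first exact: ltW.
  by rewrite nnegrE powR_ge0.
have fn0 : f <> (fun _ => 0).
  move=> /(congr1 (fun h => h (Ordinal (leq_trans k1 kn)))); rewrite /f /= k1.
  by move=> c00; move: c1; rewrite c00 ler10.
have Df : 0 < \sum_v powR `|f v| p.
  by rewrite hfp ltr_wpDr // mulr_gt0 // powR_gt0 // (lt_trans ltr01).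
have hnorm : lpnorm p g / lpnorm p f <= maxop_norm (@complete_rel n) p.
  apply: (@le_trans _ _ (lpnorm p (maxop (@complete_rel n) f) / lpnorm p f)).
    rewrite ler_pM2r ?invr_gt0; last first.
      by rewrite lt_def lp_ge0 andbT; apply/negP => /eqP h0;
         move: Df; rewrite -lp_powR // h0 powR0 ?gt_eqF // ltxx.
    apply: lp_mono => // v.
    rewrite [`|maxop _ _ _|]ger0_norm; last exact: maxop_ge0.
    rewrite [`|g v|]ger0_norm; first exact: hg.
    by rewrite /g; case: ifP.
  rewrite /maxop_norm.
  have hub : has_ubound [set y : R | exists2 h : 'I_n -> R, h <> (fun _ => 0) &
         y = lpnorm p (maxop (@complete_rel n) h) / lpnorm p h].
    exists (powR (#|'I_n|%:R) p^-1 * #|'I_n|%:R) => _ [h _ ->].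
    exact: ratio_ub.
  apply: (ub_le_sup hub).
  by exists f.
clearbody f g.
have Lf0 : 0 <= lpnorm p f by apply: (@lp_ge0 R _ p f).
have Lg0 : 0 <= lpnorm p g by apply: (@lp_ge0 R _ p g).
have hq0 : 0 <= lpnorm p g / lpnorm p f by apply: (divr_ge0 Lg0 Lf0).
have hpow : powR (lpnorm p g / lpnorm p f) p <=
            powR (maxop_norm (@complete_rel n) p) p.
  apply: (ge0_ler_powR (ltW p0)); last exact: hnorm.
    by rewrite nnegrE; apply: hq0.
  by rewrite nnegrE; apply: (le_trans hq0 hnorm).
apply: (le_trans _ hpow).
have Lfp : 0 < lpnorm p f.
  rewrite lt_def Lf0 andbT; apply/eqP => h0; move: Df.
  rewrite -(@lp_powR R _ p f p0) h0 powR0; first by rewrite ltxx.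
  by rewrite gt_eqF.
have yp : 0 < powR (lpnorm p f) p by apply: powR_gt0.
have hq : powR (lpnorm p g / lpnorm p f) p =
          powR (lpnorm p g) p / powR (lpnorm p f) p.
  exact: (@powR_div R _ _ p Lg0 Lfp).
rewrite hq.
rewrite [X in _ <= X / _](@lp_powR R _ p g p0).
rewrite [X in _ <= _ / X](@lp_powR R _ p f p0).
rewrite hgp.
rewrite hfp.
have D0 : 0 < K * powR a r + (N - K) by rewrite -hfp.
rewrite ler_pM2r; last by rewrite invr_gt0.
rewrite lerD2l mulrC.
by apply: ler_wpM2l.
Qed.

Theorem lemma3p2 (R : realType) (n : nat) :
  (ereal_sup [set ((k%:R * powR a (n%:R / k%:R) + a * (n%:R - k%:R)) /
                   (k%:R * powR a (n%:R / k%:R) + (n%:R - k%:R)))%R%:E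
              | a in [set a : R | (1 < a)%R] & k in [set k : nat | (1 <= k <= n)%N]]
   <= limf_einf (fun p : R => (powR (maxop_norm (@complete_rel n) p) p)%R%:E)
                (pinfty_nbhs R))%E.
Proof.
apply: ge_ereal_sup => _ [a /= a1 [k /= kn <-]].
rewrite limf_einfE.
apply: le_ereal_sup_tmp.
exists (ereal_inf ((fun p : R => (powR (maxop_norm (@complete_rel n) p) p)%R%:E) @` [set p : R | 0 < p])).
  exists [set p : R | 0 < p] => //.
  by exists 0; split => // x.
apply: le_ereal_inf_tmp => _ [p /= p0 <-].
rewrite lee_fin; exact: main_bound.
Qed.
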